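(* Let $b>1$ be an integer, let $n=b+1$, and consider the 2-connected $(3,b)$-puzzle on $V=\{1,\dots,n\}$, i.e. the cycle set consisting of the two cycles $\alpha=(1\ 2\ 3)$ and $\beta=(2\ 3\ 4\ \dots\ n)$. Then any even permutation of $V$ can be generated in $O(n^2)$ shifts; that is, there is an absolute constant $K$ (independent of $b$) such that every even permutation of $V$ is a product of at most $Kn^2$ factors, each of which is one of $\alpha,\alpha^{-1},\beta,\beta^{-1}$.
   Context: Permutations are written in cycle notation. A shift along a cycle $(v_1\ \dots\ v_j)$ corresponds to applying the permutation $(v_1\ \dots\ v_j)$ or its inverse to the tokens placed on the vertices of $V$. *)

(* Defs.v *)
From mathcomp Require Import all_boot all_fingroup.
Set Implicit Arguments. Unset Strict Implicit. Unset Printing Implicit Defensive.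

(* If c has duplicates we return the identity (never used below). *)
Definition cycle_fun (T : finType) (c : seq T) (x : T) : T :=
  if uniq c then next c x else x.

Lemma cycle_fun_inj (T : finType) (c : seq T) : injective (cycle_fun c).
Proof.
rewrite /cycle_fun; case U: (uniq c) => x y //.
exact: (can_inj (prev_next U)).
Qed.

Definition cycle_perm (T : finType) (c : seq T) : {perm T} :=
  perm (@cycle_fun_inj T c).

(* V = {1,...,n} with n = b+1 is modelled by 'I_(b.+1) = {0,...,b};
   vertex k corresponds to ordinal k-1. *)
Definition alpha (b : nat) : {perm 'I_b.+1} :=
  cycle_perm [:: inord 0; inord 1; inord 2].
Definition beta (b : nat) : {perm 'I_b.+1} :=
  cycle_perm [seq (inord i : 'I_b.+1) | i <- iota 1 b].

Definition shifts (b : nat) : seq {perm 'I_b.+1} :=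
  [:: alpha b; (alpha b)^-1; beta b; (beta b)^-1]%g.

(* Main.v *)
Require Import Defs.
From mathcomp Require Import all_boot all_fingroup.
From mathcomp Require Import zify.
Set Implicit Arguments. Unset Strict Implicit. Unset Printing Implicit Defensive.
Import GroupScope.

Section Pts.
Variable b : nat.
Hypothesis hb : 1 < b.
Notation pt i := (inord i : 'I_b.+1).

Lemma ptE i j : i <= b -> j <= b -> (pt i == pt j) = (i == j).
Proof.
move=> hi hj; apply/eqP/eqP => [h|->//].
by rewrite -(@inordK b i) // -(@inordK b j) // h.
Qed.

Lemma alpha_uniq : uniq [:: pt 0; pt 1; pt 2].
Proof. by rewrite /= !inE !ptE //; apply: ltnW. Qed.

Lemma alpha0 : alpha b (pt 0) = pt 1.
Proof.
rewrite /alpha /cycle_perm permE /cycle_fun alpha_uniq /next /=.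
by rewrite eqxx.
Qed.
Lemma alpha1 : alpha b (pt 1) = pt 2.
Proof.
rewrite /alpha /cycle_perm permE /cycle_fun alpha_uniq /next /=.
by rewrite ptE // ?eqxx //; apply: ltnW.
Qed.
Lemma alpha2 : alpha b (pt 2) = pt 0.
Proof.
rewrite /alpha /cycle_perm permE /cycle_fun alpha_uniq /next /=.
by rewrite !ptE // ?eqxx //; apply: ltnW.
Qed.
Lemma alpha_fix (x : 'I_b.+1) : 2 < x -> alpha b x = x.
Proof.
move=> hx; rewrite /alpha /cycle_perm permE /cycle_fun alpha_uniq /next /=.
have ne i : i <= 2 -> (x == pt i) = false.
  move=> hi; apply/negbTE/eqP => e; move: hx; rewrite e inordK; first by move: hi; case: (i) => [|[|[|]]].
  by apply: leq_trans hi _.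
by rewrite !ne.
Qed.

Lemma beta_list_uniq : uniq [seq (pt i) | i <- iota 1 b].
Proof.
rewrite map_inj_in_uniq ?iota_uniq // => i j; rewrite !mem_iota add1n !ltnS.
by move=> /andP[_ hi] /andP[_ hj] /eqP; rewrite ptE // => /eqP.
Qed.

Lemma beta0 : beta b (pt 0) = pt 0.
Proof.
rewrite /beta /cycle_perm permE /cycle_fun beta_list_uniq next_nth.
case: ifP => // /mapP[j]; rewrite mem_iota add1n ltnS => /andP[h1 h2] /eqP.
by rewrite ptE // => /eqP e; move: h1; rewrite -e.
Qed.

Lemma betaS i : 1 <= i -> i < b -> beta b (pt i) = pt i.+1.
Proof.
move=> h1 h2.
rewrite /beta /cycle_perm permE /cycle_fun beta_list_uniq next_nth.
have hin : i.-1 < size [seq (pt i) | i <- iota 1 b].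
  by rewrite size_map size_iota; case: (i) h1 h2 => // i' _ /ltnW.
have E : pt i = nth (pt 0) [seq (pt i) | i <- iota 1 b] i.-1.
  rewrite size_map in hin.
  rewrite size_iota in hin.
  by rewrite (nth_map 0) ?size_iota // nth_iota // add1n prednK.
rewrite E mem_nth // index_uniq ?beta_list_uniq //; clear E.
case: b hb h2 hin => // b' _ h2 hin /=.
rewrite size_map size_iota in hin.
rewrite (nth_map 0) ?nth_iota; first by rewrite add2n prednK.
  by case: (i) h1 h2 hin => // i' _ ; rewrite /= !ltnS.
by rewrite size_iota; case: (i) h1 h2 hin => // i' _ ; rewrite /= !ltnS.
Qed.

Lemma ptV i : i <= b -> val (pt i) = i.
Proof. by move=> h; rewrite /= inordK. Qed.

Lemma pt_cases (x : 'I_b.+1) : [\/ x = pt 0, x = pt 1, x = pt 2 | 2 < x].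
Proof.
case: (ltnP 2 x) => h; first by apply: Or44.
have : x = pt x by rewrite inord_val.
by move: h; case: (nat_of_ord x) => [|[|[|]]] // _ ->; [apply: Or41|apply: Or42|apply: Or43].
Qed.

Lemma alphaV0 : (alpha b)^-1 (pt 0) = pt 2.
Proof. by rewrite -alpha2 permK. Qed.
Lemma alphaV2 : (alpha b)^-1 (pt 2) = pt 1.
Proof. by rewrite -alpha1 permK. Qed.
Lemma alphaV_fix (x : 'I_b.+1) : 2 < x -> (alpha b)^-1 x = x.
Proof. by move=> h; rewrite -{1}(alpha_fix h) permK. Qed.

Lemma betaX k i : 1 <= i -> i + k <= b -> (beta b ^+ k) (pt i) = pt (i + k).
Proof.
move=> h1; elim: k => [|k IH] hk; first by rewrite expg0 perm1 addn0.
rewrite permX /= -permX IH; last by apply: ltnW; rewrite addnS in hk.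
rewrite betaS ?addnS //; first exact: (leq_trans h1 (leq_addr _ _)).
by rewrite -addnS.
Qed.

Lemma betaX0 k : (beta b ^+ k) (pt 0) = pt 0.
Proof. by apply: permX_fix; apply: beta0. Qed.

Definition R1 := beta b * (alpha b)^-1.

Lemma R1_0 : R1 (pt 0) = pt 2.
Proof. by rewrite permM beta0 alphaV0. Qed.
Lemma R1_1 : R1 (pt 1) = pt 1.
Proof. by rewrite permM betaS // alphaV2. Qed.
Lemma R1X1 k : (R1 ^+ k) (pt 1) = pt 1.
Proof. exact: permX_fix R1_1. Qed.
Lemma R1S i : 2 <= i -> i < b -> R1 (pt i) = pt i.+1.
Proof.
move=> h1 h2; rewrite permM betaS //; last by apply: leq_trans h1.
by rewrite alphaV_fix // ptV.
Qed.

Lemma R1X k : k + 2 <= b -> (R1 ^+ k) (pt 2) = pt (k + 2).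
Proof.
elim: k => [|k IH] hk; first by rewrite expg0 perm1.
rewrite permX /= -permX IH; last by apply: ltnW.
by rewrite R1S // ?addn2 //.
Qed.

Lemma R1X0 k : k + 2 <= b -> (R1 ^+ k.+1) (pt 0) = pt (k + 2).
Proof. by move=> hk; rewrite permX iterSr R1_0 -permX R1X. Qed.

Definition reach k (g : {perm 'I_b.+1}) := exists w : seq {perm 'I_b.+1},
  all (fun g => g \in shifts b) w /\ size w <= k /\ g = \prod_(h <- w) h.

Lemma reach_le k k' g : k <= k' -> reach k g -> reach k' g.
Proof. by move=> h [w [h1 [h2 h3]]]; exists w; split => //; split => //; apply: leq_trans h. Qed.

Lemma reach1 : reach 0 1.
Proof. by exists [::]; rewrite big_nil. Qed.

Lemma reachM k l g h : reach k g -> reach l h -> reach (k + l) (g * h).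
Proof.
move=> [w [h1 [h2 ->]]] [w' [h1' [h2' ->]]]; exists (w ++ w'); split.
  by rewrite all_cat h1 h1'.
by rewrite size_cat leq_add // big_cat.
Qed.

Lemma reach_gen g : g \in shifts b -> reach 1 g.
Proof. by move=> h; exists [:: g]; rewrite /= h big_seq1. Qed.

Lemma shiftsV g : g \in shifts b -> g^-1 \in shifts b.
Proof. by rewrite /shifts !inE => /or4P[] /eqP ->; rewrite ?invgK eqxx ?orbT. Qed.

Lemma reachV k g : reach k g -> reach k g^-1.
Proof.
move=> [w [h1 [h2 ->]]]; exists (rev (map (fun x => x^-1) w)); split.
  by rewrite all_rev all_map; apply/allP => x hx /=; apply: shiftsV; move/allP: h1; apply.
split; first by rewrite size_rev size_map.
elim: w {h1 h2} => [|a w IH]; first by rewrite big_nil invg1.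
rewrite /= rev_cons -cats1 big_cat big_seq1 /=. by rewrite -IH big_cons invMg.
Qed.

Lemma reachX k n g : reach k g -> reach (n * k) (g ^+ n).
Proof.
move=> h; elim: n => [|n IH]; first by rewrite expg0; apply: reach1.
by rewrite expgS mulSn; apply: reachM.
Qed.

Lemma reachJ k l c w : reach l c -> reach k w -> reach (k + l + k) (c ^ w).
Proof. by move=> hc hw; rewrite conjgE mulgA; apply: reachM (reachM (reachV hw) hc) hw. Qed.


Lemma ne01 : pt 0 != pt 1. Proof. by rewrite ptE // ltnW. Qed.
Lemma ne02 : pt 0 != pt 2. Proof. by rewrite ptE. Qed.
Lemma ne12 : pt 1 != pt 2. Proof. by rewrite ptE // ltnW. Qed.
Lemma ne10 : pt 1 != pt 0. Proof. by rewrite eq_sym ne01. Qed.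
Lemma ne20 : pt 2 != pt 0. Proof. by rewrite eq_sym ne02. Qed.
Lemma ne21 : pt 2 != pt 1. Proof. by rewrite eq_sym ne12. Qed.
Ltac nes := rewrite ?ne01 ?ne02 ?ne12 ?ne10 ?ne20 ?ne21.

Lemma ne_big i (x : 'I_b.+1) : i <= 2 -> 2 < x -> pt i != x.
Proof.
move=> hi h; apply/eqP => e; move: h; rewrite -e ptV; last by apply: leq_trans hb.
by rewrite ltnNge hi.
Qed.

Lemma alpha_even : ~~ odd_perm (alpha b).
Proof.
have -> : alpha b = tperm (pt 0) (pt 1) * tperm (pt 0) (pt 2).
  apply/permP => x; rewrite permM; case: (pt_cases x) => [->|->|->|h].
  - by rewrite alpha0 tpermL tpermD; nes.
  - by rewrite alpha1 tpermR tpermL.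
  - by rewrite alpha2 (tpermD ne02 ne12) tpermR.
  - by rewrite alpha_fix // !tpermD // ne_big.
by rewrite odd_permM !odd_tperm ne01 ne02.
Qed.

Lemma conj_fix (w : {perm 'I_b.+1}) m (x : 'I_b.+1) :
  w (pt 0) <= m -> w (pt 1) <= m -> w (pt 2) <= m -> m < x -> (alpha b ^ w) x = x.
Proof.
move=> h0 h1 h2 hx; rewrite -(permKV w x) permJ.
case: (pt_cases (w^-1 x)) => [e|e|e|h]; last by rewrite alpha_fix.
- by move: hx; rewrite -(permKV w x) e ltnNge h0.
- by move: hx; rewrite -(permKV w x) e ltnNge h1.
- by move: hx; rewrite -(permKV w x) e ltnNge h2.
Qed.

Lemma inv_fix (d : {perm 'I_b.+1}) x : d x = x -> d^-1 x = x.
Proof. by move=> h; rewrite -{1}h permK. Qed.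

Lemma dlem m y : 2 <= m -> m <= b -> y < m -> exists d, reach (5 * b.+1) d /\
  d (pt m) = pt y /\ (forall x : 'I_b.+1, m < x -> d x = x) /\ ~~ odd_perm d.
Proof.
move=> hm2 hmb hym.
have rb : reach 1 (beta b) by apply: reach_gen; rewrite /shifts !inE eqxx ?orbT.
have ra : reach 1 (alpha b) by apply: reach_gen; rewrite /shifts !inE eqxx ?orbT.
have raV : reach 1 (alpha b)^-1 by apply: reachV.
have [y0|ypos] := posnP y; last have [ym|ym] := eqVneq y m.-1.
-
  pose w := beta b ^+ (m - 2).
  have e2 : w (pt 2) = pt m by rewrite betaX // ?subnKC //; lia.
  have e1 : w (pt 1) = pt m.-1 by rewrite betaX //; [congr inord; lia | lia].
  have e0 : w (pt 0) = pt 0 by rewrite betaX0.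
  exists (alpha b ^ w); split.
    apply: reach_le (reachJ ra (reachX (m - 2) rb)); lia.
  split; first by rewrite y0 -e2 permJ alpha2.
  split; last by rewrite odd_permJ alpha_even.
  by move=> x hx; apply: (conj_fix (m:=m)) => //; rewrite ?e0 ?e1 ?e2 ptV //; lia.
-
  pose w := beta b ^+ (m - 2).
  have e2 : w (pt 2) = pt m by rewrite betaX // ?subnKC //; lia.
  have e1 : w (pt 1) = pt y by rewrite betaX //; [congr inord; lia | lia].
  have e0 : w (pt 0) = pt 0 by rewrite betaX0.
  have ey : (alpha b ^ w) (pt y) = pt m by rewrite -e1 permJ alpha1 e2.
  exists (alpha b ^ w)^-1; split.
    apply: reachV; apply: reach_le (reachJ ra (reachX (m - 2) rb)); lia.
  split; first by rewrite -ey permK.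
  split; last by rewrite odd_permV odd_permJ alpha_even.
  by move=> x hx; apply: inv_fix; apply: (conj_fix (m:=m)) => //; rewrite ?e0 ?e1 ?e2 ptV //; lia.
-
  pose w := R1 ^+ (m - y - 2).+1 * beta b ^+ (y - 1).
  have e2 : w (pt 2) = pt m.
    by rewrite permM R1X ?betaX; [congr inord|..]; lia.
  have e1 : w (pt 1) = pt y.
    by rewrite permM R1X1 ?betaX; [congr inord|..]; lia.
  have e0 : w (pt 0) = pt m.-1.
    by rewrite permM R1X0 ?betaX; [congr inord|..]; lia.
  have rR : reach 2 R1 by apply: (reachM rb raV).
  have ey : (alpha b ^ w) (pt y) = pt m by rewrite -e1 permJ alpha1 e2.
  exists (alpha b ^ w)^-1; split.
    apply: reachV; apply: reach_le (reachJ ra (reachM (reachX (m - y - 2).+1 rR) (reachX (y - 1) rb))); lia.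
  split; first by rewrite -ey permK.
  split; last by rewrite odd_permV odd_permJ alpha_even.
  by move=> x hx; apply: inv_fix; apply: (conj_fix (m:=m)) => //; rewrite ?e0 ?e1 ?e2 ptV //; lia.
Qed.


Lemma pt_val (x : 'I_b.+1) i : val x = i -> x = pt i.
Proof. by move=> <-; rewrite inord_val. Qed.

Lemma stay (s : {perm 'I_b.+1}) m (x : 'I_b.+1) : (forall x : 'I_b.+1, m < x -> s x = x) ->
  x <= m -> s x <= m.
Proof.
move=> hs hx; rewrite leqNgt; apply/negP => h.
have e := perm_inj (hs _ h).
by move: h; rewrite e ltnNge hx.
Qed.

Lemma small_fix (s : {perm 'I_b.+1}) : (forall x : 'I_b.+1, 1 < x -> s x = x) ->
  ~~ odd_perm s -> s = 1.
Proof.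
move=> hs hodd.
have two z : z <= 1 -> s (pt z) = pt 0 \/ s (pt z) = pt 1.
  move=> hz; have := stay hs (x := pt z); rewrite ptV; last by apply: leq_trans hz (ltnW hb).
  move=> /(_ hz); case: (pt_cases (s (pt z))) => [->|->|->|h]; [by left|by right| |].
    by rewrite ptV.
  by move=> h'; move: h; rewrite ltnNge (leq_trans h').
have [e0|e0] := two 0%N isT; have [e1|e1] := two 1%N isT.
- by have /eqP := perm_inj (etrans e0 (esym e1)); rewrite (negbTE ne01).
- apply/permP => x; rewrite perm1; case: (pt_cases x) => [->|->|->|h] //.
    by rewrite hs // ptV.
  by rewrite hs // (leq_trans _ h).
- move: hodd.
  have -> : s = tperm (pt 0) (pt 1).
    apply/permP => x; case: (pt_cases x) => [->|->|->|h].
    + by rewrite e0 tpermL.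
    + by rewrite e1 tpermR.
    + by rewrite hs ?ptV // tpermD; nes.
    + by rewrite hs ?(ltnW h) // (tpermD (ne_big _ h) (ne_big _ h)).
  by rewrite odd_tperm ne01.
- by have /eqP := perm_inj (etrans e0 (esym e1)); rewrite (negbTE ne01).
Qed.

Lemma ind m : m <= b -> forall s : {perm 'I_b.+1},
  (forall x : 'I_b.+1, m < x -> s x = x) -> ~~ odd_perm s -> reach (5 * b.+1 * m) s.
Proof.
elim: m => [|m IH] hm s hs hodd.
  rewrite (small_fix _ hodd); first exact: reach_le reach1.
  by move=> x hx; apply: hs; apply: ltnW.
case: (leqP m.+1 1) => hm1.
  rewrite (small_fix _ hodd); first exact: reach_le reach1.
  by move=> x hx; apply: hs; apply: leq_trans hx.
set y := s (pt m.+1).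
have hy : y <= m.+1 by apply: stay => //; rewrite ptV.
case: (eqVneq y (pt m.+1)) => ey.
  apply: reach_le (IH (ltnW hm) s _ hodd); first by rewrite leq_mul2l leqnSn orbT.
  move=> x hx; case: (ltngtP m.+1 x) => h; [by apply: hs| lia|].
  by rewrite (pt_val (esym h)) -/y ey.
have hy' : y < m.+1.
  rewrite ltn_neqAle hy andbT; apply/eqP => e; move: ey; rewrite -e inord_val eqxx //.
have [d [rd [hd [fd od]]]] := dlem hm1 hm hy'.
rewrite inord_val in hd.
pose t := s * d^-1.
have ht : reach (5 * b.+1 * m) t.
  apply: IH; first exact: ltnW.
    move=> x hx; rewrite permM; case: (ltngtP m.+1 x) => h; first by rewrite hs // inv_fix // fd.
      lia.
    by rewrite (pt_val (esym h)) -/y -hd permK.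
  by rewrite odd_permM odd_permV (negbTE hodd) (negbTE od).
have -> : s = t * d by rewrite /t -mulgA mulVg mulg1.
by apply: reach_le (reachM ht rd); rewrite (mulnS (5 * b.+1)) addnC.
Qed.

End Pts.

Close Scope group_scope.

Theorem lemma1 :
  exists K : nat, forall b : nat, 1 < b ->
    forall s : {perm 'I_b.+1}, ~~ odd_perm s ->
      exists w : seq {perm 'I_b.+1},
        all (fun g => g \in shifts b) w /\
        size w <= K * (b.+1) ^ 2 /\
        s = (\prod_(g <- w) g)%g.
Proof.
exists 5 => b hb s hs.
have := ind hb (leqnn b) (s := s) _ hs.
case.
  by move=> x hx; move: (ltn_ord x); rewrite ltnS leqNgt hx.
move=> w [h1 [h2 h3]]; exists w; split => //; split => //.
by apply: leq_trans h2 _; rewrite expnS mulnA leq_mul2l leqnSn orbT.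
Qed.
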